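(* In $\mathrm{HMF}(\mathbb{C}^2,\Gamma_W,W)$, for each $1\le i\le p-1$ and $1\le j\le q-1$, the objects $K_{x,i}$ and $K_{y,j}$ are orthogonal to $K_f$ (all graded morphisms in both directions vanish).
   Context: Let $p,q\ge2$ be integers and $W=x^py+xy^q$. Let $L$ be the abelian group generated by $\vec x,\vec y,\vec c$ modulo $p\vec x+\vec y=\vec x+q\vec y=\vec c$; $S=\mathbb{C}[x,y]$ is $L$-graded with $\deg x=\vec x$, $\deg y=\vec y$, and $R=S/(W)$; $M(l)_k=M_{k+l}$. $\mathrm{HMF}(\mathbb{C}^2,\Gamma_W,W)$ is the homotopy category of $L$-graded matrix factorisations of $W$, equivalent to $D^b(\mathrm{gr}R)/\mathrm{Perf}(\mathrm{gr}R)$, in which a finitely generated $L$-graded $R$-module is identified with its stabilisation; $\mathrm{Hom}^n(X,Y)=\mathrm{Hom}(X,Y[n])$. Let $f=x^{p-1}+y^{q-1}$. $K_x=R/(x)$, $K_y=R/(y)$, $K_f=R/(f)$, $K_{x,i}=K_x((i+1-p)\vec x)$, $K_{y,j}=K_y((j+1-q)\vec y)$. *)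

(* Defs.v *)
From mathcomp Require Import all_boot all_algebra.
From mathcomp Require Import Rstruct complex.
From mathcomp Require Import mpoly.

Set Implicit Arguments.
Unset Strict Implicit.
Unset Printing Implicit Defensive.

Import GRing.Theory.
Local Open Scope ring_scope.

Definition CC : comNzRingType := complex Rdefinitions.R.

Definition S := {mpoly CC[2]}.
Definition ix : 'I_2 := @Ordinal 2 0 isT.
Definition iy : 'I_2 := @Ordinal 2 1 isT.
Definition X : S := 'X_ix.
Definition Y : S := 'X_iy.

(** Elements of L are represented by triples (a,b,k) standing for
    a*x + b*y + k*c; two triples represent the same element of L iff their
    difference lies in the subgroup generated by the relations
    p x + y - c and x + q y - c. *)
Definition Ldeg := (int * int * int)%type.

Definition Ladd (u v : Ldeg) : Ldeg := (u.1.1 + v.1.1, u.1.2 + v.1.2, u.2 + v.2).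
Definition Lopp (u : Ldeg) : Ldeg := (- u.1.1, - u.1.2, - u.2).
Definition Lsub (u v : Ldeg) : Ldeg := Ladd u (Lopp v).
Definition Lx : Ldeg := (1, 0, 0).
Definition Ly : Ldeg := (0, 1, 0).
Definition Lc : Ldeg := (0, 0, 1).

Definition Leq (p q : nat) (u v : Ldeg) : Prop :=
  exists m n : int,
    [/\ u.1.1 - v.1.1 = m * p%:Z + n,
        u.1.2 - v.1.2 = m + n * q%:Z
      & u.2 - v.2 = - (m + n)].

Definition mdegL (m : 'X_{1..2}) : Ldeg := ((m ix)%:Z, (m iy)%:Z, 0).

(** P is L-homogeneous of degree d (0 is homogeneous of every degree). *)
Definition Lhomog (p q : nat) (d : Ldeg) (P : S) : Prop :=
  forall m, m \in msupp P -> Leq p q (mdegL m) d.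

Definition W (p q : nat) : S := X ^+ p * Y + X * Y ^+ q.
Definition fpoly (p q : nat) : S := X ^+ p.-1 + Y ^+ q.-1.

(** An L-graded matrix factorisation of W of rank one:
      X0 --f0--> X1 --f1--> X0(c),  with X0 = S(d0), X1 = S(d1)
    (S(l)_k = S_(k+l)); f0 is homogeneous of degree d1 - d0, f1 of degree
    d0 + c - d1, and f0 f1 = W.  All objects we need are of rank one. *)
Record MF1 := mkMF1 { d0 : Ldeg; d1 : Ldeg; f0 : S; f1 : S }.

Definition twist (l : Ldeg) (M : MF1) : MF1 :=
  mkMF1 (Ladd (d0 M) l) (Ladd (d1 M) l) (f0 M) (f1 M).

Definition shift1 (M : MF1) : MF1 :=
  mkMF1 (d1 M) (Ladd (d0 M) Lc) (- f1 M) (- f0 M).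
Definition shiftm1 (M : MF1) : MF1 :=
  mkMF1 (Lsub (d1 M) Lc) (d0 M) (- f1 M) (- f0 M).

Definition shift (n : int) (M : MF1) : MF1 :=
  match n with
  | Posz k => iter k shift1 M
  | Negz k => iter k.+1 shiftm1 M
  end.

Definition is_mor (p q : nat) (M N : MF1) (g0 g1 : S) : Prop :=
  [/\ Lhomog p q (Lsub (d0 N) (d0 M)) g0,
      Lhomog p q (Lsub (d1 N) (d1 M)) g1,
      g1 * f0 M = f0 N * g0
    & g0 * f1 M = f1 N * g1].

Definition null_homotopic (p q : nat) (M N : MF1) (g0 g1 : S) : Prop :=
  exists t s : S,
    [/\ Lhomog p q (Lsub (d0 N) (d1 M)) t,
        Lhomog p q (Lsub (Lsub (d1 N) Lc) (d0 M)) s,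
        g0 = t * f0 M + f1 N * s
      & g1 = f0 N * t + s * f1 M].

Definition hom_zero (p q : nat) (M N : MF1) : Prop :=
  forall g0 g1, is_mor p q M N g0 g1 -> null_homotopic p q M N g0 g1.

(** M and N are orthogonal: Hom^n(M,N) = Hom(M, N[n]) = 0 and
    Hom^n(N,M) = 0 for all n. *)
Definition mf_orthogonal (p q : nat) (M N : MF1) : Prop :=
  forall n : int, hom_zero p q M (shift n N) /\ hom_zero p q N (shift n M).

(** Stabilisations of the modules.  The stabilisation of R/(g) for
    W = g h is the matrix factorisation S(-c) --h--> S(-deg g) --g--> S,
    whose cokernel (of the last map) is R/(g). *)
Definition Kx (p q : nat) : MF1 :=
  mkMF1 (Lopp Lc) (Lopp Lx) (X ^+ p.-1 * Y + Y ^+ q) X.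
Definition Ky (p q : nat) : MF1 :=
  mkMF1 (Lopp Lc) (Lopp Ly) (X ^+ p + X * Y ^+ q.-1) Y.
(* deg f = (p-1) x = c - x - y *)
Definition Kf (p q : nat) : MF1 :=
  mkMF1 (Lopp Lc) (Lsub (Ladd Lx Ly) Lc) (X * Y) (fpoly p q).

Definition Kxi (p q : nat) (i : nat) : MF1 :=
  twist ((i%:Z + 1 - p%:Z), 0, 0) (Kx p q).
Definition Kyj (p q : nat) (j : nat) : MF1 :=
  twist (0, (j%:Z + 1 - q%:Z), 0) (Ky p q).

(* Main.v *)
Require Import Defs.
From mathcomp Require Import all_boot all_algebra.
From mathcomp Require Import Rstruct complex.
From mathcomp Require Import mpoly.
From mathcomp Require Import zify ring lra.
Set Implicit Arguments. Unset Strict Implicit. Unset Printing Implicit Defensive.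
Import GRing.Theory Num.Theory.
Local Open Scope ring_scope.

Lemma Leq_trans p q u v w : Leq p q u v -> Leq p q v w -> Leq p q u w.
Proof.
case=> m [n] [h1 h2 h3]; case=> m' [n'] [h1' h2' h3'].
exists (m + m'), (n + n'); split; lia.
Qed.
Lemma Leq_sym p q u v : Leq p q u v -> Leq p q v u.
Proof. case=> m [n] [h1 h2 h3]; exists (-m), (-n); split; lia. Qed.
Lemma Leq_eq p q u v : u = v -> Leq p q u v.
Proof. move=> ->; exists 0, 0; split; lia. Qed.
Lemma Leq_xy p q : Leq p q (p%:Z - 1, 0, 0) (0, q%:Z - 1, 0).
Proof. exists 1, (-1); split=> /=; lia. Qed.
Lemma Leq_add p q u v u' v' : Leq p q u v -> Leq p q u' v' -> Leq p q (Ladd u u') (Ladd v v').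
Proof.
case=> m [n] [h1 h2 h3]; case=> m' [n'] [h1' h2' h3'].
exists (m + m'), (n + n'); rewrite /Ladd /=; split; lia.
Qed.


Definition mono (a b : nat) : 'X_{1..2} := (U_(ix) *+ a + U_(iy) *+ b)%MM.

Lemma mono_ix a b : mono a b ix = a.
Proof. by rewrite /mono mnmDE !mulmnE !mnm1E /= mul1n mul0n addn0. Qed.
Lemma mono_iy a b : mono a b iy = b.
Proof. by rewrite /mono mnmDE !mulmnE !mnm1E /= mul1n mul0n. Qed.

Lemma ord2 (j : 'I_2) : j = ix \/ j = iy.
Proof. case: j => [[|[|j]]] hj; [left|right|by []]; exact: val_inj. Qed.

Lemma monoE (m : 'X_{1..2}) : m = mono (m ix) (m iy).
Proof. apply/mnmP=> j; case: (ord2 j) => ->; by rewrite ?mono_ix ?mono_iy. Qed.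

Lemma monoD a b a' b' : (mono a b + mono a' b')%MM = mono (a + a') (b + b').
Proof. apply/mnmP=> j; rewrite mnmDE; case: (ord2 j) => ->; by rewrite ?mono_ix ?mono_iy. Qed.

Lemma mdegL_mono a b : mdegL (mono a b) = (a%:Z, b%:Z, 0).
Proof. by rewrite /mdegL mono_ix mono_iy. Qed.

Lemma Xmono a b : 'X_[mono a b] = X ^+ a * Y ^+ b :> S.
Proof. by rewrite /mono mpolyXD !mpolyXn. Qed.

Lemma coefMX_nle (P : S) m' m : ~~ (m' <= m)%MM -> (P * 'X_[m'])@_m = 0.
Proof.
move=> hn; apply/eqP; rewrite mcoeff_eq0 (perm_mem (msuppMX _ _)).
apply/mapP=> -[m'' _ e]; move: hn; rewrite e; by rewrite lem_addr.
Qed.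

Lemma coefMX (P : S) m' m : (P * 'X_[m'])@_(m' + m) = P@_m.
Proof. exact: mcoeffMX. Qed.

Lemma cancelX (P Q : S) m : 'X_[m] * P = 'X_[m] * Q -> P = Q.
Proof.
move=> e; apply/mpolyP=> k; rewrite -(coefMX P m k) -(coefMX Q m k).
by rewrite ![_ * 'X_[m]]mulrC e.
Qed.

Section H.
Variables p q : nat.
Lemma Lhomog0 d : Lhomog p q d 0.
Proof. by move=> m; rewrite msupp0. Qed.
Lemma LhomogD d P Q : Lhomog p q d P -> Lhomog p q d Q -> Lhomog p q d (P + Q).
Proof. move=> hP hQ m /msuppD_le; rewrite mem_cat => /orP[/hP|/hQ] //. Qed.
Lemma LhomogZ d c P : Lhomog p q d P -> Lhomog p q d (c *: P).
Proof. move=> hP m /msuppZ_le; exact: hP. Qed.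
Lemma LhomogN d P : Lhomog p q d P -> Lhomog p q d (- P).
Proof. move=> hP m; rewrite (perm_mem (msuppN _)); exact: hP. Qed.
Lemma LhomogX d m : Leq p q (mdegL m) d -> Lhomog p q d 'X_[m].
Proof. move=> h m'; rewrite msuppX mem_seq1 => /eqP ->; exact: h. Qed.
End H.

Lemma lin_decomp p q (h A B : S) (F G : 'X_{1..2} -> S) Ds Dt :
 (forall m, m \in msupp h -> 'X_[m] = A * F m + B * G m /\ Lhomog p q Ds (F m) /\ Lhomog p q Dt (G m)) ->
 exists s t, h = A * s + B * t /\ Lhomog p q Ds s /\ Lhomog p q Dt t.
Proof.
move=> H.
exists (\sum_(m <- msupp h) h@_m *: F m), (\sum_(m <- msupp h) h@_m *: G m).
split; last split.
- rewrite {1}(mpolyE h) !mulr_sumr -big_split /= !big_seq; apply: eq_bigr => m hm.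
  have [-> _] := H m hm; by rewrite scalerDr !scalerAr.
- rewrite big_seq; apply: (big_ind (Lhomog p q Ds)) => [|x y|m hm]; [exact: Lhomog0|exact: LhomogD| ].
  apply: LhomogZ; by have [_ [? _]] := H m hm.
- rewrite big_seq; apply: (big_ind (Lhomog p q Dt)) => [|x y|m hm]; [exact: Lhomog0|exact: LhomogD| ].
  apply: LhomogZ; by have [_ [_ ?]] := H m hm.
Qed.

Lemma XE : X = 'X_[mono 1 0].
Proof. by rewrite Xmono expr1 expr0 mulr1. Qed.
Lemma YE : Y = 'X_[mono 0 1].
Proof. by rewrite Xmono expr1 expr0 mul1r. Qed.

Lemma noX0 p q (P Q : S) : (2 <= p)%N -> (2 <= q)%N -> P * fpoly p q = X * Q ->
  forall b, P@_(mono 0 b) = 0.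
Proof.
move=> hp hq e b; have := congr1 (mcoeff (mono 0 (q.-1 + b))) e.
rewrite /fpoly mulrDr.
have -> : X ^+ p.-1 = 'X_[mono p.-1 0] by rewrite Xmono expr0 mulr1.
have -> : Y ^+ q.-1 = 'X_[mono 0 q.-1] by rewrite Xmono expr0 mul1r.
rewrite mcoeffD coefMX_nle; last first.
  apply/negP => /mnm_lepP /(_ ix); rewrite !mono_ix; by case: (p) hp => [|[|]].
rewrite (_ : mono 0 (q.-1 + b) = (mono 0 q.-1 + mono 0 b)%MM); last by rewrite monoD.
rewrite coefMX add0r => ->.
rewrite mulrC XE coefMX_nle //.
apply/negP => /mnm_lepP /(_ ix); by rewrite mnmDE !mono_ix.
Qed.

Lemma noY0 p q (P Q : S) : (2 <= p)%N -> (2 <= q)%N -> P * fpoly p q = Y * Q ->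
  forall a, P@_(mono a 0) = 0.
Proof.
move=> hp hq e a; have := congr1 (mcoeff (mono (p.-1 + a) 0)) e.
rewrite /fpoly mulrDr.
have -> : X ^+ p.-1 = 'X_[mono p.-1 0] by rewrite Xmono expr0 mulr1.
have -> : Y ^+ q.-1 = 'X_[mono 0 q.-1] by rewrite Xmono expr0 mul1r.
rewrite mcoeffD [X in _ + X]coefMX_nle; last first.
  apply/negP => /mnm_lepP /(_ iy); rewrite !mono_iy; by case: (q) hq => [|[|]].
rewrite (_ : mono (p.-1 + a) 0 = (mono p.-1 0 + mono a 0)%MM); last by rewrite monoD.
rewrite coefMX addr0 => ->.
rewrite mulrC YE coefMX_nle //.
apply/negP => /mnm_lepP /(_ iy); by rewrite mnmDE !mono_iy.
Qed.

Lemma decompX p q (h : S) D : (2 <= p)%N -> (2 <= q)%N -> Lhomog p q D h ->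
  (forall b, (b < q.-1)%N -> ~ Leq p q (0, b%:Z, 0) D) ->
  exists s t, h = X * s + fpoly p q * t /\ Lhomog p q (Lsub D Lx) s
     /\ Lhomog p q (Lsub D (0, q.-1%:Z, 0)) t.
Proof.
move=> hp hq hh hex.
apply: (lin_decomp (F := fun m => if m ix == 0%N then - 'X_[mono p.-2 (m iy - q.-1)]
                                  else 'X_[mono (m ix).-1 (m iy)])
                   (G := fun m => if m ix == 0%N then 'X_[mono 0 (m iy - q.-1)] else 0)).
move=> m hm; have := hh m hm; rewrite {1 2}(monoE m) mdegL_mono.
move: (m ix) (m iy) => a b.
case=> [mm [nn [e1 e2 e3]]]; simpl in e1, e2, e3.
case: eqP => [a0|/eqP a0].
  subst a.
  have hb : (q.-1 <= b)%N.
    rewrite leqNgt; apply/negP => hb; apply: (hex b hb).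
    by exists mm, nn.
  split; last split.
  - rewrite !Xmono /fpoly expr0 !mul1r -{1}(subnKC hb) exprD.
    have -> : p.-1 = (p.-2).+1 by case: (p) hp => [|[|]].
    rewrite exprS; ring.
  - apply/LhomogN/LhomogX; rewrite mdegL_mono.
    exists (mm + 1), (nn - 1); rewrite /Lsub /Ladd /Lopp /=; split; lia.
  - apply/LhomogX; rewrite mdegL_mono.
    exists mm, nn; rewrite /Lsub /Ladd /Lopp /=; split; lia.
split; last split.
- rewrite !Xmono mulr0 addr0.
  rewrite -{1}(prednK (n:=a)) ?lt0n // exprS XE Xmono; ring.
- apply/LhomogX; rewrite mdegL_mono.
  exists mm, nn; rewrite /Lsub /Ladd /Lopp /=; split; lia.
- exact: Lhomog0.
Qed.

Lemma decompY p q (h : S) D : (2 <= p)%N -> (2 <= q)%N -> Lhomog p q D h ->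
  (forall a, (a < p.-1)%N -> ~ Leq p q (a%:Z, 0, 0) D) ->
  exists s t, h = Y * s + fpoly p q * t /\ Lhomog p q (Lsub D Ly) s
     /\ Lhomog p q (Lsub D (p.-1%:Z, 0, 0)) t.
Proof.
move=> hp hq hh hex.
apply: (lin_decomp (F := fun m => if m iy == 0%N then - 'X_[mono (m ix - p.-1) q.-2]
                                  else 'X_[mono (m ix) (m iy).-1])
                   (G := fun m => if m iy == 0%N then 'X_[mono (m ix - p.-1) 0] else 0)).
move=> m hm; have := hh m hm; rewrite {1 2}(monoE m) mdegL_mono.
move: (m ix) (m iy) => a b.
case=> [mm [nn [e1 e2 e3]]]; simpl in e1, e2, e3.
case: eqP => [b0|/eqP b0].
  subst b.
  have ha : (p.-1 <= a)%N.
    rewrite leqNgt; apply/negP => ha; apply: (hex a ha).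
    by exists mm, nn.
  split; last split.
  - rewrite !Xmono /fpoly expr0 !mulr1 -{1}(subnKC ha) exprD.
    have -> : q.-1 = (q.-2).+1 by case: (q) hq => [|[|]].
    rewrite exprS; ring.
  - apply/LhomogN/LhomogX; rewrite mdegL_mono.
    exists (mm - 1), (nn + 1); rewrite /Lsub /Ladd /Lopp /=; split; lia.
  - apply/LhomogX; rewrite mdegL_mono.
    exists mm, nn; rewrite /Lsub /Ladd /Lopp /=; split; lia.
split; last split.
- rewrite !Xmono mulr0 addr0.
  rewrite -{1}(prednK (n:=b)) ?lt0n // exprS YE Xmono; ring.
- apply/LhomogX; rewrite mdegL_mono.
  exists mm, nn; rewrite /Lsub /Ladd /Lopp /=; split; lia.
- exact: Lhomog0.
Qed.

Lemma divX p q (P : S) D : Lhomog p q D P -> (forall b, P@_(mono 0 b) = 0) ->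
  exists h, P = X * h /\ Lhomog p q (Lsub D Lx) h.
Proof.
move=> hh h0.
suff [s [t [e [hs _]]]] : exists s t, P = X * s + 0 * t /\ Lhomog p q (Lsub D Lx) s /\ Lhomog p q D t.
  by exists s; rewrite e mul0r addr0.
apply: (@lin_decomp p q P X 0 (fun m => 'X_[mono (m ix).-1 (m iy)]) (fun _ => 0)).
  move=> m hm; have := hh m hm; rewrite {1 2}(monoE m) mdegL_mono.
  have : m ix != 0%N.
    apply/negP => /eqP e0; move: hm; rewrite mcoeff_msupp {1}(monoE m) e0 h0 eqxx //.
  move: (m ix) (m iy) => a b a0.
  case=> [mm [nn [e1 e2 e3]]]; simpl in e1, e2, e3.
  split; last split.
  - rewrite !Xmono mul0r addr0.
    rewrite -{1}(prednK (n:=a)) ?lt0n // exprS XE Xmono; ring.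
  - apply/LhomogX; rewrite mdegL_mono.
    exists mm, nn; rewrite /Lsub /Ladd /Lopp /=; split; lia.
  - exact: Lhomog0.
Qed.

Lemma divY p q (P : S) D : Lhomog p q D P -> (forall a, P@_(mono a 0) = 0) ->
  exists h, P = Y * h /\ Lhomog p q (Lsub D Ly) h.
Proof.
move=> hh h0.
suff [s [t [e [hs _]]]] : exists s t, P = Y * s + 0 * t /\ Lhomog p q (Lsub D Ly) s /\ Lhomog p q D t.
  by exists s; rewrite e mul0r addr0.
apply: (@lin_decomp p q P Y 0 (fun m => 'X_[mono (m ix) (m iy).-1]) (fun _ => 0)).
  move=> m hm; have := hh m hm; rewrite {1 2}(monoE m) mdegL_mono.
  have : m iy != 0%N.
    apply/negP => /eqP e0; move: hm; rewrite mcoeff_msupp {1}(monoE m) e0 h0 eqxx //.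
  move: (m ix) (m iy) => a b b0.
  case=> [mm [nn [e1 e2 e3]]]; simpl in e1, e2, e3.
  split; last split.
  - rewrite !Xmono mul0r addr0.
    rewrite -{1}(prednK (n:=b)) ?lt0n // exprS YE Xmono; ring.
  - apply/LhomogX; rewrite mdegL_mono.
    exists mm, nn; rewrite /Lsub /Ladd /Lopp /=; split; lia.
  - exact: Lhomog0.
Qed.
Lemma excl_core (P Q I : int) (m n B : int) : 1 <= I -> I <= P - 1 -> 2 <= P -> 2 <= Q -> - Q < B -> B < Q - 1 ->
  I - P = m * P + n -> B = m + n * Q -> False.
Proof.
move=> h1 h2 h3 h4 h5 h6 e1 e2.
have en : n = I - P - m * P by lia.
rewrite en in e2.
have e3 : B = (I - P) * Q - m * (P * Q - 1) by rewrite e2; ring.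
have hPQ : 0 <= P * Q - 1 by nia.
case: (Num.Theory.lerP 0 m) => hm.
  have : 0 <= m * (P * Q - 1) by nia.
  have : (I - P) * Q <= - Q by nia.
  lia.
have : (-1 - m) * (P * Q - 1) >= 0 by nia.
have : I * Q >= Q by nia.
lia.
Qed.

Lemma Lhomog_Leq p q d d' P : Leq p q d d' -> Lhomog p q d P -> Lhomog p q d' P.
Proof. move=> hd hP m hm; exact: Leq_trans (hP m hm) hd. Qed.

Lemma Ladd_k (d : Ldeg) (k l : int) : Ladd (Ladd d (0, 0, k)) (0, 0, l) = Ladd d (0, 0, k + l).
Proof. case: d => [[a b] c]; rewrite /Ladd /=; congr (_, _, _); lia. Qed.
Lemma Lsub_k (d : Ldeg) (k : int) : Lsub (Ladd d (0, 0, k)) Lc = Ladd d (0, 0, k - 1).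
Proof. case: d => [[a b] c]; rewrite /Lsub /Ladd /Lopp /=; congr (_, _, _); lia. Qed.
Lemma Ladd_0 (d : Ldeg) : Ladd d (0, 0, 0) = d.
Proof. case: d => [[a b] c]; rewrite /Ladd /=; congr (_, _, _); lia. Qed.

Lemma shift_form (M : MF1) (n : int) : exists k : int,
 shift n M = mkMF1 (Ladd (d0 M) (0,0,k)) (Ladd (d1 M) (0,0,k)) (f0 M) (f1 M) \/
 shift n M = mkMF1 (Ladd (d1 M) (0,0,k)) (Ladd (d0 M) (0,0,k+1)) (- f1 M) (- f0 M).
Proof.
case: n => k /=.
  elim: k => [|k [l [E|E]]].
  - by exists 0; left; rewrite /= !Ladd_0; case: M.
  - exists l; right; rewrite iterS E /shift1 /=. by rewrite (Ladd_k _ l 1).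
  - exists (l + 1); left; rewrite iterS E /shift1 /= !opprK. by rewrite (Ladd_k _ l 1).
suff H : forall k0 : nat, exists l : int,
 iter k0 shiftm1 M = mkMF1 (Ladd (d0 M) (0,0,l)) (Ladd (d1 M) (0,0,l)) (f0 M) (f1 M) \/
 iter k0 shiftm1 M = mkMF1 (Ladd (d1 M) (0,0,l)) (Ladd (d0 M) (0,0,l+1)) (- f1 M) (- f0 M).
  exact: (H k.+1).
clear k; elim=> [|k [l [E|E]]].
- by exists 0; left; rewrite /= !Ladd_0; case: M.
- exists (l - 1); right; rewrite iterS E /shiftm1 /= Lsub_k; congr mkMF1.
  by congr Ladd; congr (_, _, _); lia.
- exists l; left; rewrite iterS E /shiftm1 /= Lsub_k !opprK; congr mkMF1.
  by congr Ladd; congr (_, _, _); lia.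
Qed.

Ltac Ltriv := rewrite /Lsub /Ladd /Lopp /Lx /Ly /Lc /=;
  solve [exists 0, 0; split => /=; lia | exists 0, 1; split => /=; lia
        | exists 0, (-1); split => /=; lia | exists 1, 0; split => /=; lia
        | exists (-1), 0; split => /=; lia].

Lemma Yq q : (1 <= q)%N -> Y ^+ q = Y * Y ^+ q.-1 :> S.
Proof. by move=> hq; rewrite -exprS prednK. Qed.
Lemma Xp p : (1 <= p)%N -> X ^+ p = X * X ^+ p.-1 :> S.
Proof. by move=> hp; rewrite -exprS prednK. Qed.

Lemma case1 p q i n : (2 <= p)%N -> (2 <= q)%N -> (1 <= i <= p.-1)%N ->
  hom_zero p q (Kxi p q i) (shift n (Kf p q)).
Proof.
move=> hp hq /andP[hi1 hi2] g0 g1.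
have [k [E|E]] := shift_form (Kf p q) n; rewrite E; case; rewrite /Kxi /twist /Kx /Kf /= => H0 H1 E1 E2.
- have e : g1 * fpoly p q = X * g0 by rewrite mulrC -E2 mulrC.
  have [h [eh hh]] := divX H1 (noX0 hp hq e).
  have eg0 : g0 = fpoly p q * h.
    apply: (@cancelX _ _ (mono 1 0)); rewrite -XE mulrC E2 eh; ring.
  exists 0, h; split.
  - exact: Lhomog0.
  - apply: Lhomog_Leq hh; Ltriv.
  - by rewrite eg0 mul0r add0r.
  - by rewrite eh mulr0 add0r mulrC.
have eg0 : g0 = - (Y * g1).
  apply: (@cancelX _ _ (mono 1 0)); rewrite -XE mulrC E2; ring.
edestruct (decompX hp hq H1) as [s [t [eg1 [hs ht]]]].
  move=> b hb [mm [nn [e1 e2 e3]]]; rewrite /Lsub /Ladd /Lopp /Lx /Lc /= in e1 e2 e3.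
  apply: (excl_core (P:=p%:Z) (Q:=q%:Z) (I:=i%:Z) (m:=mm) (n:=nn) (B:=b%:Z)); lia.
exists (- t), s; split.
- apply/LhomogN; apply: Lhomog_Leq ht; Ltriv.
- apply: Lhomog_Leq hs; Ltriv.
- rewrite /= eg0 eg1 /fpoly (Yq (ltnW hq)); ring.
- rewrite /= eg1; ring.
Qed.

Lemma case2 p q i n : (2 <= p)%N -> (2 <= q)%N -> (1 <= i <= p.-1)%N ->
  hom_zero p q (Kf p q) (shift n (Kxi p q i)).
Proof.
move=> hp hq /andP[hi1 hi2] g0 g1.
have [k [E|E]] := shift_form (Kxi p q i) n; rewrite E; case; rewrite /Kxi /twist /Kx /Kf /= => H0 H1 E1 E2.
- have [h [eh hh]] := divX H0 (noX0 hp hq E2).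
  have eg1 : g1 = fpoly p q * h.
    apply: (@cancelX _ _ (mono 1 0)); rewrite -XE -E2 eh; ring.
  exists 0, h; split.
  - exact: Lhomog0.
  - apply: Lhomog_Leq hh; Ltriv.
  - by rewrite eh mul0r add0r.
  - by rewrite eg1 mulr0 add0r mulrC.
have eg0 : g0 = - (Y * g1).
  apply: (@cancelX _ _ (mono 1 0)); rewrite -XE.
  apply: oppr_inj; rewrite -mulNr -E1; ring.
edestruct (decompX hp hq H1) as [s [t [eg1 [hs ht]]]].
  move=> b hb [mm [nn [e1 e2 e3]]]; rewrite /Lsub /Ladd /Lopp /Lx /Lc /= in e1 e2 e3.
  apply: (excl_core (P:=p%:Z) (Q:=q%:Z) (I:=i%:Z) (m:=-mm) (n:=-nn) (B:=-(b%:Z+1))); lia.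
exists (- s), t; split.
- apply/LhomogN; apply: Lhomog_Leq hs; Ltriv.
- apply: Lhomog_Leq ht; Ltriv.
- rewrite /= eg0 eg1 /fpoly (Yq (ltnW hq)); ring.
- rewrite /= eg1; ring.
Qed.

Lemma case3 p q j n : (2 <= p)%N -> (2 <= q)%N -> (1 <= j <= q.-1)%N ->
  hom_zero p q (Kyj p q j) (shift n (Kf p q)).
Proof.
move=> hp hq /andP[hj1 hj2] g0 g1.
have [k [E|E]] := shift_form (Kf p q) n; rewrite E; case; rewrite /Kyj /twist /Ky /Kf /= => H0 H1 E1 E2.
- have e : g1 * fpoly p q = Y * g0 by rewrite mulrC -E2 mulrC.
  have [h [eh hh]] := divY H1 (noY0 hp hq e).
  have eg0 : g0 = fpoly p q * h.
    apply: (@cancelX _ _ (mono 0 1)); rewrite -YE mulrC E2 eh; ring.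
  exists 0, h; split.
  - exact: Lhomog0.
  - apply: Lhomog_Leq hh; Ltriv.
  - by rewrite eg0 mul0r add0r.
  - by rewrite eh mulr0 add0r mulrC.
have eg0 : g0 = - (X * g1).
  apply: (@cancelX _ _ (mono 0 1)); rewrite -YE mulrC E2; ring.
edestruct (decompY hp hq H1) as [s [t [eg1 [hs ht]]]].
  move=> a ha [mm [nn [e1 e2 e3]]]; rewrite /Lsub /Ladd /Lopp /Ly /Lc /= in e1 e2 e3.
  apply: (excl_core (P:=q%:Z) (Q:=p%:Z) (I:=j%:Z) (m:=nn) (n:=mm) (B:=a%:Z)); lia.
exists (- t), s; split.
- apply/LhomogN; apply: Lhomog_Leq ht; Ltriv.
- apply: Lhomog_Leq hs; Ltriv.
- rewrite /= eg0 eg1 /fpoly (Xp (ltnW hp)); ring.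
- rewrite /= eg1; ring.
Qed.

Lemma case4 p q j n : (2 <= p)%N -> (2 <= q)%N -> (1 <= j <= q.-1)%N ->
  hom_zero p q (Kf p q) (shift n (Kyj p q j)).
Proof.
move=> hp hq /andP[hj1 hj2] g0 g1.
have [k [E|E]] := shift_form (Kyj p q j) n; rewrite E; case; rewrite /Kyj /twist /Ky /Kf /= => H0 H1 E1 E2.
- have [h [eh hh]] := divY H0 (noY0 hp hq E2).
  have eg1 : g1 = fpoly p q * h.
    apply: (@cancelX _ _ (mono 0 1)); rewrite -YE -E2 eh; ring.
  exists 0, h; split.
  - exact: Lhomog0.
  - apply: Lhomog_Leq hh; Ltriv.
  - by rewrite eh mul0r add0r.
  - by rewrite eg1 mulr0 add0r mulrC.
have eg0 : g0 = - (X * g1).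
  apply: (@cancelX _ _ (mono 0 1)); rewrite -YE.
  apply: oppr_inj; rewrite -mulNr -E1; ring.
edestruct (decompY hp hq H1) as [s [t [eg1 [hs ht]]]].
  move=> a ha [mm [nn [e1 e2 e3]]]; rewrite /Lsub /Ladd /Lopp /Ly /Lx /Lc /= in e1 e2 e3.
  apply: (excl_core (P:=q%:Z) (Q:=p%:Z) (I:=j%:Z) (m:=-nn) (n:=-mm) (B:=-(a%:Z+1))); lia.
exists (- s), t; split.
- apply/LhomogN; apply: Lhomog_Leq hs; Ltriv.
- apply: Lhomog_Leq ht; Ltriv.
- rewrite /= eg0 eg1 /fpoly (Xp (ltnW hp)); ring.
- rewrite /= eg1; ring.
Qed.

Theorem lemma2p8 (p q : nat) (hp : (2 <= p)%N) (hq : (2 <= q)%N) :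
  (forall i : nat, (1 <= i <= p.-1)%N -> mf_orthogonal p q (Kxi p q i) (Kf p q)) /\
  (forall j : nat, (1 <= j <= q.-1)%N -> mf_orthogonal p q (Kyj p q j) (Kf p q)).
Proof.
split=> [i hi n|j hj n]; split.
- exact: case1.
- exact: case2.
- exact: case3.
- exact: case4.
Qed.
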